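(* Let $f,\hat f:M^2\to\mathbb{R}^3=\operatorname{Im}\mathbb{H}$ be non-flat conformal minimal immersions forming a Darboux pair, with $\hat f$ a Darboux transform of $f$ with parameter $t\in\mathbb{R}\setminus\{0\}$ with respect to the Christoffel dual $f^*=n$, where $n$ is the Gauss map of $f$, and let $\hat n=-(\hat f-f)^{-1}n(\hat f-f)$ be the Gauss map of $\hat f$. Then, up to translation, $$\hat f=f+\tfrac1t(\hat n-n)^{-1}.$$
   Context: $\mathbb{R}^3$ is identified with $\operatorname{Im}\mathbb{H}$ with product $xy=-\langle x,y\rangle+x\times y$ and $x^{-1}=-x/|x|^2$. The Gauss map $n$ of a minimal surface is a Christoffel dual of $f$ (Christoffel dual: locally, up to homothety and translation, a solution of $df^*=-\frac1E(f_udu-f_vdv)$ in conformal curvature line coordinates with metric $E(du^2+dv^2)$). A Darboux transform with parameter $t$ with respect to $f^*$ is a solution $\hat f$ of $d\hat f=t(\hat f-f)\,df^*(\hat f-f)$. A Darboux pair is a pair of surfaces enveloping a common 2-sphere congruence (first order contact at corresponding points), with commuting shape operators and conformally equivalent induced metrics. *)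

(* Defs.v *)
From Stdlib Require Import Reals.
Open Scope R_scope.

Record V3 := mkV3 { v1 : R; v2 : R; v3 : R }.
Definition vadd (a b : V3) : V3 := mkV3 (v1 a + v1 b) (v2 a + v2 b) (v3 a + v3 b).
Definition vsub (a b : V3) : V3 := mkV3 (v1 a - v1 b) (v2 a - v2 b) (v3 a - v3 b).
Definition dot (a b : V3) : R := v1 a * v1 b + v2 a * v2 b + v3 a * v3 b.
Definition cross (a b : V3) : V3 :=
  mkV3 (v2 a * v3 b - v3 a * v2 b) (v3 a * v1 b - v1 a * v3 b) (v1 a * v2 b - v2 a * v1 b).
Definition zero3 : V3 := mkV3 0 0 0.

Record H := mkH { hr : R; hi : R; hj : R; hk : R }.
Definition qadd (p q : H) : H := mkH (hr p + hr q) (hi p + hi q) (hj p + hj q) (hk p + hk q).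
Definition qopp (p : H) : H := mkH (- hr p) (- hi p) (- hj p) (- hk p).
Definition qsub (p q : H) : H := qadd p (qopp q).
Definition qscale (s : R) (p : H) : H := mkH (s * hr p) (s * hi p) (s * hj p) (s * hk p).
Definition qmul (p q : H) : H :=
  mkH (hr p * hr q - hi p * hi q - hj p * hj q - hk p * hk q)
      (hr p * hi q + hi p * hr q + hj p * hk q - hk p * hj q)
      (hr p * hj q - hi p * hk q + hj p * hr q + hk p * hi q)
      (hr p * hk q + hi p * hj q - hj p * hi q + hk p * hr q).
Definition qconj (p : H) : H := mkH (hr p) (- hi p) (- hj p) (- hk p).
Definition qnorm2 (p : H) : R := hr p * hr p + hi p * hi p + hj p * hj p + hk p * hk p.
Definition qinv (p : H) : H := qscale (/ qnorm2 p) (qconj p).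
Definition im (v : V3) : H := mkH 0 (v1 v) (v2 v) (v3 v).

Definition dom := R -> R -> Prop.

Definition open_dom (U : dom) : Prop :=
  forall u v, U u v -> exists e, 0 < e /\
    forall u' v', (u' - u) ^ 2 + (v' - v) ^ 2 < e ^ 2 -> U u' v'.

Definition connected_dom (U : dom) : Prop :=
  forall A B : dom, open_dom A -> open_dom B ->
    (forall u v, U u v -> A u v \/ B u v) ->
    (forall u v, U u v -> ~ (A u v /\ B u v)) ->
    (exists u v, U u v /\ A u v) -> (exists u v, U u v /\ B u v) -> False.

Definition continuous_on (U : dom) (F : R -> R -> R) : Prop :=
  forall u v, U u v -> forall eps, 0 < eps -> exists d, 0 < d /\
    forall u' v', U u' v' -> (u' - u) ^ 2 + (v' - v) ^ 2 < d ^ 2 ->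
      Rabs (F u' v' - F u v) < eps.

Definition is_dpartials (U : dom) (F Fu Fv : R -> R -> R) : Prop :=
  forall u v, U u v ->
    derivable_pt_lim (fun s => F s v) u (Fu u v) /\
    derivable_pt_lim (fun s => F u s) v (Fv u v).

Fixpoint Ck (U : dom) (k : nat) (F : R -> R -> R) : Prop :=
  match k with
  | O => continuous_on U F
  | S k' => exists Fu Fv, is_dpartials U F Fu Fv /\ Ck U k' Fu /\ Ck U k' Fv
  end.

Definition smooth (U : dom) (F : R -> R -> R) : Prop := forall k, Ck U k F.

Definition smooth3 (U : dom) (F : R -> R -> V3) : Prop :=
  smooth U (fun u v => v1 (F u v)) /\ smooth U (fun u v => v2 (F u v)) /\
  smooth U (fun u v => v3 (F u v)).

Definition is_partials3 (U : dom) (F Fu Fv : R -> R -> V3) : Prop :=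
  is_dpartials U (fun u v => v1 (F u v)) (fun u v => v1 (Fu u v)) (fun u v => v1 (Fv u v)) /\
  is_dpartials U (fun u v => v2 (F u v)) (fun u v => v2 (Fu u v)) (fun u v => v2 (Fv u v)) /\
  is_dpartials U (fun u v => v3 (F u v)) (fun u v => v3 (Fu u v)) (fun u v => v3 (Fv u v)).

Definition immersion (U : dom) (F : R -> R -> V3) : Prop :=
  smooth3 U F /\ exists Fu Fv, is_partials3 U F Fu Fv /\
    forall u v, U u v -> cross (Fu u v) (Fv u v) <> zero3.

Definition conformal (U : dom) (F : R -> R -> V3) : Prop :=
  forall Fu Fv, is_partials3 U F Fu Fv -> forall u v, U u v ->
    dot (Fu u v) (Fu u v) = dot (Fv u v) (Fv u v) /\ dot (Fu u v) (Fv u v) = 0.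

Definition gauss_map (U : dom) (F N : R -> R -> V3) : Prop :=
  smooth3 U N /\
  forall u v, U u v -> dot (N u v) (N u v) = 1 /\
    forall Fu Fv, is_partials3 U F Fu Fv ->
      dot (N u v) (Fu u v) = 0 /\ dot (N u v) (Fv u v) = 0.

Record M2 := mkM2 { m11 : R; m12 : R; m21 : R; m22 : R }.
Definition m2mul (A B : M2) : M2 :=
  mkM2 (m11 A * m11 B + m12 A * m21 B) (m11 A * m12 B + m12 A * m22 B)
       (m21 A * m11 B + m22 A * m21 B) (m21 A * m12 B + m22 A * m22 B).
Definition m2det (A : M2) : R := m11 A * m22 A - m12 A * m21 A.
Definition m2inv (A : M2) : M2 :=
  let d := / m2det A in mkM2 (d * m22 A) (- d * m12 A) (- d * m21 A) (d * m11 A).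
Definition m2tr (A : M2) : R := m11 A + m22 A.

Definition first_ff (Fu Fv : V3) : M2 :=
  mkM2 (dot Fu Fu) (dot Fu Fv) (dot Fv Fu) (dot Fv Fv).
Definition second_ff (Fu Fv Nu Nv : V3) : M2 :=
  mkM2 (- dot Nu Fu) (- dot Nu Fv) (- dot Nv Fu) (- dot Nv Fv).
Definition shape_op (Fu Fv Nu Nv : V3) : M2 :=
  m2mul (m2inv (first_ff Fu Fv)) (second_ff Fu Fv Nu Nv).

Definition minimal (U : dom) (F : R -> R -> V3) : Prop :=
  forall Fu Fv N Nu Nv, is_partials3 U F Fu Fv -> gauss_map U F N ->
    is_partials3 U N Nu Nv -> forall u v, U u v ->
      m2tr (shape_op (Fu u v) (Fv u v) (Nu u v) (Nv u v)) = 0.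

Definition non_flat (U : dom) (F : R -> R -> V3) : Prop :=
  exists Fu Fv N Nu Nv, is_partials3 U F Fu Fv /\ gauss_map U F N /\
    is_partials3 U N Nu Nv /\ exists u v, U u v /\
      m2det (shape_op (Fu u v) (Fv u v) (Nu u v) (Nv u v)) <> 0.

(* Darboux pair: common enveloped (Moebius) 2-sphere congruence
   {x | a|x|^2 - 2<c,x> + b = 0}, |c|^2 - a b > 0 (a = 0: planes),
   commuting shape operators, conformally equivalent induced metrics. *)
Definition on_sphere_contact (a b : R) (c : V3) (X Xu Xv : V3) : Prop :=
  a * dot X X - 2 * dot c X + b = 0 /\
  dot (vsub (mkV3 (a * v1 X) (a * v2 X) (a * v3 X)) c) Xu = 0 /\
  dot (vsub (mkV3 (a * v1 X) (a * v2 X) (a * v3 X)) c) Xv = 0.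

Definition darboux_pair (U : dom) (F Fh : R -> R -> V3) : Prop :=
  (exists (a b : R -> R -> R) (c : R -> R -> V3),
     smooth U a /\ smooth U b /\ smooth3 U c /\
     forall u v, U u v -> dot (c u v) (c u v) - a u v * b u v > 0 /\
       forall Fu Fv Fhu Fhv, is_partials3 U F Fu Fv -> is_partials3 U Fh Fhu Fhv ->
         on_sphere_contact (a u v) (b u v) (c u v) (F u v) (Fu u v) (Fv u v) /\
         on_sphere_contact (a u v) (b u v) (c u v) (Fh u v) (Fhu u v) (Fhv u v)) /\
  (forall Fu Fv N Nu Nv Fhu Fhv Nh Nhu Nhv,
     is_partials3 U F Fu Fv -> gauss_map U F N -> is_partials3 U N Nu Nv ->
     is_partials3 U Fh Fhu Fhv -> gauss_map U Fh Nh -> is_partials3 U Nh Nhu Nhv ->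
     forall u v, U u v ->
       m2mul (shape_op (Fu u v) (Fv u v) (Nu u v) (Nv u v))
             (shape_op (Fhu u v) (Fhv u v) (Nhu u v) (Nhv u v)) =
       m2mul (shape_op (Fhu u v) (Fhv u v) (Nhu u v) (Nhv u v))
             (shape_op (Fu u v) (Fv u v) (Nu u v) (Nv u v))) /\
  (forall Fu Fv Fhu Fhv, is_partials3 U F Fu Fv -> is_partials3 U Fh Fhu Fhv ->
     forall u v, U u v -> exists lam, 0 < lam /\
       dot (Fhu u v) (Fhu u v) = lam * dot (Fu u v) (Fu u v) /\
       dot (Fhu u v) (Fhv u v) = lam * dot (Fu u v) (Fv u v) /\
       dot (Fhv u v) (Fhv u v) = lam * dot (Fv u v) (Fv u v)).

(* Fh is a Darboux transform of F with parameter t w.r.t. the dual Fs: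
   d Fh = t (Fh - F) dFs (Fh - F)  (quaternionic products) *)
Definition darboux_transform (U : dom) (F Fh Fs : R -> R -> V3) (t : R) : Prop :=
  forall Fhu Fhv Fsu Fsv, is_partials3 U Fh Fhu Fhv -> is_partials3 U Fs Fsu Fsv ->
    forall u v, U u v ->
      let g := im (vsub (Fh u v) (F u v)) in
      im (Fhu u v) = qscale t (qmul (qmul g (im (Fsu u v))) g) /\
      im (Fhv u v) = qscale t (qmul (qmul g (im (Fsv u v))) g).

(* Main.v *)
Require Import Defs.
From Stdlib Require Import Reals Lra Lia Psatz Classical.
Open Scope R_scope.

Lemma dplus f g x a b : derivable_pt_lim f x a -> derivable_pt_lim g x b ->
  derivable_pt_lim (fun s => f s + g s) x (a + b).
Proof. intros; apply (derivable_pt_lim_plus f g); auto. Qed.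
Lemma dminus f g x a b : derivable_pt_lim f x a -> derivable_pt_lim g x b ->
  derivable_pt_lim (fun s => f s - g s) x (a - b).
Proof. intros; apply (derivable_pt_lim_minus f g); auto. Qed.
Lemma dmult f g x a b : derivable_pt_lim f x a -> derivable_pt_lim g x b ->
  derivable_pt_lim (fun s => f s * g s) x (a * g x + f x * b).
Proof. intros; apply (derivable_pt_lim_mult f g); auto. Qed.
Lemma ddiv f g x a b : derivable_pt_lim f x a -> derivable_pt_lim g x b -> g x <> 0 ->
  derivable_pt_lim (fun s => f s / g s) x ((a * g x - b * f x) / (g x)²).
Proof. intros; apply (derivable_pt_lim_div f g); auto. Qed.
Lemma dconst c x : derivable_pt_lim (fun _ => c) x 0.
Proof. apply (derivable_pt_lim_const c). Qed.
Lemma deq f x a b : derivable_pt_lim f x a -> a = b -> derivable_pt_lim f x b.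
Proof. intros; subst; auto. Qed.

Lemma dlocal f g x l e : 0 < e -> (forall y, Rabs (y - x) < e -> f y = g y) ->
  derivable_pt_lim f x l -> derivable_pt_lim g x l.
Proof.
  intros He Heq Hd eps Heps.
  destruct (Hd eps Heps) as [d Hdd].
  assert (Hm : 0 < Rmin d e) by (apply Rmin_pos; [apply cond_pos|auto]).
  exists (mkposreal _ Hm). intros h Hh0 Hh. simpl in Hh.
  rewrite <- !Heq.
  - apply Hdd; auto. apply Rlt_le_trans with (1 := Hh). apply Rmin_l.
  - replace (x - x) with 0 by ring. rewrite Rabs_R0. auto.
  - replace (x + h - x) with h by ring. apply Rlt_le_trans with (1 := Hh). apply Rmin_r.
Qed.

Definition vscale (s : R) (a : V3) : V3 := mkV3 (s * v1 a) (s * v2 a) (s * v3 a).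

Definition D3 (A : R -> V3) (x : R) (A' : V3) : Prop :=
  derivable_pt_lim (fun s => v1 (A s)) x (v1 A') /\
  derivable_pt_lim (fun s => v2 (A s)) x (v2 A') /\
  derivable_pt_lim (fun s => v3 (A s)) x (v3 A').

Lemma D3_sub A B x a b : D3 A x a -> D3 B x b -> D3 (fun s => vsub (A s) (B s)) x (vsub a b).
Proof. intros [? [? ?]] [? [? ?]]; unfold vsub; simpl; repeat split; apply dminus; auto. Qed.
Lemma D3_add A B x a b : D3 A x a -> D3 B x b -> D3 (fun s => vadd (A s) (B s)) x (vadd a b).
Proof. intros [? [? ?]] [? [? ?]]; unfold vadd; simpl; repeat split; apply dplus; auto. Qed.
Lemma D3_scal p A x p' a : derivable_pt_lim p x p' -> D3 A x a ->
  D3 (fun s => vscale (p s) (A s)) x (vadd (vscale p' (A x)) (vscale (p x) a)).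
Proof. intros Hp [? [? ?]]; unfold vscale, vadd; simpl; repeat split; apply dmult; auto. Qed.
Lemma D3_dot A B x a b : D3 A x a -> D3 B x b ->
  derivable_pt_lim (fun s => dot (A s) (B s)) x (dot a (B x) + dot (A x) b).
Proof.
  intros [? [? ?]] [? [? ?]]; unfold dot.
  eapply deq; [apply dplus; [apply dplus|]; apply dmult; eauto | simpl; ring].
Qed.
Lemma D3_local A B x a e : 0 < e -> (forall y, Rabs (y - x) < e -> A y = B y) ->
  D3 A x a -> D3 B x a.
Proof.
  intros He Heq [? [? ?]]; repeat split; eapply dlocal; eauto;
  intros y Hy; simpl; rewrite Heq; auto.
Qed.
Lemma D3_unique A x a b : D3 A x a -> D3 A x b -> a = b.
Proof.
  intros [? [? ?]] [? [? ?]]. destruct a, b; simpl in *.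
  f_equal; eapply uniqueness_limite; eauto.
Qed.

Lemma partials_D3 U F Fu Fv u v : is_partials3 U F Fu Fv -> U u v ->
  D3 (fun s => F s v) u (Fu u v) /\ D3 (fun s => F u s) v (Fv u v).
Proof.
  intros [H1 [H2 H3]] Huv.
  destruct (H1 u v Huv), (H2 u v Huv), (H3 u v Huv).
  split; repeat split; auto.
Qed.

Lemma D3_partials U F Fu Fv :
  (forall u v, U u v -> D3 (fun s => F s v) u (Fu u v) /\ D3 (fun s => F u s) v (Fv u v)) ->
  is_partials3 U F Fu Fv.
Proof.
  intros H. unfold is_partials3, is_dpartials.
  split; [|split]; intros x y Huv; destruct (H x y Huv) as [[? [? ?]] [? [? ?]]]; auto.
Qed.

Lemma smooth3_partials U F : smooth3 U F -> exists Fu Fv, is_partials3 U F Fu Fv.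
Proof.
  intros [H1 [H2 H3]].
  destruct (H1 1%nat) as [a1 [b1 [P1 _]]].
  destruct (H2 1%nat) as [a2 [b2 [P2 _]]].
  destruct (H3 1%nat) as [a3 [b3 [P3 _]]].
  exists (fun u v => mkV3 (a1 u v) (a2 u v) (a3 u v)), (fun u v => mkV3 (b1 u v) (b2 u v) (b3 u v)).
  unfold is_partials3; simpl; auto.
Qed.

Lemma open_lines U u v : open_dom U -> U u v -> exists e, 0 < e /\
  (forall s, Rabs (s - u) < e -> U s v) /\ (forall s, Rabs (s - v) < e -> U u s).
Proof.
  intros HU Huv. destruct (HU u v Huv) as [e [He Hb]].
  exists e; split; auto; split; intros s Hs; apply Hb.
  - replace ((v - v)^2) with 0 by ring. rewrite Rplus_0_r.
    rewrite <- (pow2_abs (s-u)). pose proof (Rabs_pos (s-u)). nra.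
  - replace ((u - u)^2) with 0 by ring. rewrite Rplus_0_l.
    rewrite <- (pow2_abs (s-v)). pose proof (Rabs_pos (s-v)). nra.
Qed.
Definition NHD (n nd g gd : V3) : V3 :=
  vsub nd (vadd (vscale ((2 * (dot nd g + dot n gd) * dot g g - (dot gd g + dot g gd) * (2 * dot n g)) / Rsqr (dot g g)) g)
                (vscale (2 * dot n g / dot g g) gd)).

Definition FHD (t : R) (g nd : V3) : V3 :=
  vscale t (vsub (vscale (dot g g) nd) (vscale (2 * dot g nd) g)).

Lemma HD_lem n nd g fd t : dot n nd = 0 -> dot n fd = 0 ->
  dot nd g + dot n (vsub (FHD t g nd) fd) = dot g nd * (1 - 2 * t * dot n g).
Proof.
  intros H1 H2.
  transitivity (dot g nd * (1 - 2 * t * dot n g) + t * dot g g * dot n nd - dot n fd).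
  - destruct n, nd, g, fd; unfold FHD, dot, vsub, vscale; simpl; ring.
  - rewrite H1, H2; ring.
Qed.

Lemma KA n nd g fd t : dot g g <> 0 -> dot n nd = 0 -> dot n fd = 0 ->
  dot (NHD n nd g (vsub (FHD t g nd) fd)) (FHD t g nd) =
  t * dot g g * dot nd nd * (1 - 2 * t * dot n g) + 2 * t * dot n g * dot fd nd.
Proof.
  intros HG H1 H2. unfold NHD. rewrite (HD_lem n nd g fd t H1 H2).
  unfold Rsqr.
  destruct n as [n1 n2 n3], nd as [a1 a2 a3], g as [g1 g2 g3], fd as [b1 b2 b3].
  unfold FHD, dot, vsub, vadd, vscale in *; simpl in *.
  field. auto.
Qed.

Lemma QD a g b t : im a = qscale t (qmul (qmul (im g) (im b)) (im g)) -> a = FHD t g b.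
Proof.
  intros H. destruct a as [a1 a2 a3], g as [g1 g2 g3], b as [b1 b2 b3].
  unfold im, qscale, qmul in H; simpl in H. injection H as E0 E1 E2 E3.
  unfold FHD, vscale, vsub, dot; simpl. f_equal; [rewrite E1|rewrite E2|rewrite E3]; ring.
Qed.

Lemma QN nh n g : dot g g <> 0 ->
  im nh = qopp (qmul (qmul (qinv (im g)) (im n)) (im g)) ->
  nh = vsub n (vscale (2 * dot n g / dot g g) g).
Proof.
  intros HG H. destruct nh as [a1 a2 a3], g as [g1 g2 g3], n as [n1 n2 n3].
  unfold dot in *; simpl in *.
  unfold im, qopp, qinv, qscale, qconj, qnorm2, qmul in H; simpl in H. injection H as E0 E1 E2 E3.
  unfold vscale, vsub, dot; simpl. f_equal; [rewrite E1|rewrite E2|rewrite E3]; field;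
  intro Hc; apply HG; lra.
Qed.

Lemma dot_nonzero a : a <> zero3 -> dot a a <> 0.
Proof.
  intros H Hc. apply H. destruct a as [a1 a2 a3]. unfold dot in Hc; simpl in Hc.
  unfold zero3. f_equal; nra.
Qed.

Lemma cross_nonzero p q : cross p q <> zero3 -> dot p p <> 0.
Proof.
  intros H Hc. apply H. destruct p as [a1 a2 a3]. unfold dot in Hc; simpl in Hc.
  assert (a1 = 0) by nra. assert (a2 = 0) by nra. assert (a3 = 0) by nra. subst.
  unfold cross, zero3; simpl. f_equal; ring.
Qed.

Lemma sub_nonzero a b : a <> b -> dot (vsub a b) (vsub a b) <> 0.
Proof.
  intros H. apply dot_nonzero. intro Hc. apply H. destruct a, b; unfold vsub, zero3 in Hc.
  injection Hc as E1 E2 E3. f_equal; lra.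
Qed.


Lemma perp_comp x p q : dot x p = 0 -> dot x q = 0 ->
  dot (cross p q) (cross p q) * v1 x = dot x (cross p q) * v1 (cross p q) /\
  dot (cross p q) (cross p q) * v2 x = dot x (cross p q) * v2 (cross p q) /\
  dot (cross p q) (cross p q) * v3 x = dot x (cross p q) * v3 (cross p q).
Proof.
  intros H1 H2.
  assert (E1 : dot (cross p q) (cross p q) * v1 x - dot x (cross p q) * v1 (cross p q)
    = dot x q * v1 (cross (cross p q) p) - dot x p * v1 (cross (cross p q) q))
    by (destruct x, p, q; unfold dot, cross; simpl; ring).
  assert (E2 : dot (cross p q) (cross p q) * v2 x - dot x (cross p q) * v2 (cross p q)
    = dot x q * v2 (cross (cross p q) p) - dot x p * v2 (cross (cross p q) q))
    by (destruct x, p, q; unfold dot, cross; simpl; ring).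
  assert (E3 : dot (cross p q) (cross p q) * v3 x - dot x (cross p q) * v3 (cross p q)
    = dot x q * v3 (cross (cross p q) p) - dot x p * v3 (cross (cross p q) q))
    by (destruct x, p, q; unfold dot, cross; simpl; ring).
  rewrite H1, H2 in *. repeat split; lra.
Qed.

Lemma par_scalar (xi yi wi X Y W dxy : R) : W <> 0 -> W*xi = X*wi -> W*yi = Y*wi ->
  dxy*W = X*Y -> W = Y*Y -> xi = dxy*yi.
Proof.
  intros HW Hx Hy Hd HY. apply (Rmult_eq_reg_l (W*W)); [|apply Rmult_integral_contrapositive; auto].
  transitivity (W * (W * xi)); [ring|]. rewrite Hx.
  transitivity ((dxy * W) * (W * yi)); [|ring]. rewrite Hd, Hy.
  rewrite HY at 1. ring.
Qed.

Lemma parallel x y p q : dot x p = 0 -> dot x q = 0 -> dot y p = 0 -> dot y q = 0 ->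
  dot y y = 1 -> cross p q <> zero3 -> x = vscale (dot x y) y.
Proof.
  intros H1 H2 H3 H4 Hy Hw.
  pose proof (dot_nonzero _ Hw) as HW.
  destruct (perp_comp x p q H1 H2) as [X1 [X2 X3]].
  destruct (perp_comp y p q H3 H4) as [Y1 [Y2 Y3]].
  set (w := cross p q) in *. set (W := dot w w) in *.
  set (X := dot x w) in *. set (Y := dot y w) in *.
  assert (Hd : dot x y * W = X * Y).
  { apply (Rmult_eq_reg_l W); auto.
    transitivity ((W * v1 x) * (W * v1 y) + (W * v2 x) * (W * v2 y) + (W * v3 x) * (W * v3 y)).
    { unfold dot; ring. }
    rewrite X1, X2, X3, Y1, Y2, Y3. unfold W; unfold dot; ring. }
  assert (HY : W = Y * Y).
  { apply (Rmult_eq_reg_l W); auto.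
    transitivity (W * W * dot y y). { rewrite Hy; ring. }
    transitivity ((W * v1 y) * (W * v1 y) + (W * v2 y) * (W * v2 y) + (W * v3 y) * (W * v3 y)).
    { unfold dot; ring. }
    rewrite Y1, Y2, Y3. unfold W; unfold dot; ring. }
  destruct x as [x1 x2 x3]; unfold vscale; simpl in *. f_equal; eapply par_scalar; eauto.
Qed.

Lemma dot_comm a b : dot a b = dot b a.
Proof. unfold dot; ring. Qed.

Lemma trace_lem Fu Fv Nu Nv : dot Fu Fu = dot Fv Fv -> dot Fu Fv = 0 -> dot Fu Fu <> 0 ->
  m2tr (shape_op Fu Fv Nu Nv) = 0 -> dot Nu Fu + dot Nv Fv = 0.
Proof.
  intros H1 H2 H3 H.
  unfold shape_op, first_ff, second_ff, m2tr, m2mul, m2inv, m2det in H; simpl in H.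
  rewrite (dot_comm Fv Fu), H2, <- H1 in H.
  set (E := dot Fu Fu) in *.
  assert (Ex : / (E * E - 0 * 0) * E * - dot Nu Fu + - / (E * E - 0 * 0) * 0 * - dot Nv Fu +
      (- / (E * E - 0 * 0) * 0 * - dot Nu Fv + / (E * E - 0 * 0) * E * - dot Nv Fv)
      = - (dot Nu Fu + dot Nv Fv) / E) by (field; auto).
  rewrite Ex in H. 
  assert (Hz : (dot Nu Fu + dot Nv Fv) / E = 0) by lra.
  apply (Rmult_eq_reg_r (/ E)); [|apply Rinv_neq_0_compat; auto]. rewrite Rmult_0_l. exact Hz.
Qed.

Lemma det_zero Fu Fv Nu Nv : dot Nu Fu = 0 -> dot Nu Fv = 0 -> dot Nv Fu = 0 -> dot Nv Fv = 0 ->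
  m2det (shape_op Fu Fv Nu Nv) = 0.
Proof.
  intros H1 H2 H3 H4. unfold shape_op, second_ff. rewrite H1, H2, H3, H4.
  unfold m2det, m2mul; simpl; ring.
Qed.

Lemma final_alg f fh n t : t <> 0 -> fh <> f -> 2 * t * dot n (vsub fh f) = 1 ->
  im fh = qadd (im (vadd f zero3))
    (qscale (/ t) (qinv (qsub (im (vsub n (vscale (2 * dot n (vsub fh f) / dot (vsub fh f) (vsub fh f)) (vsub fh f)))) (im n)))).
Proof.
  intros Ht Hne Hh. pose proof (sub_nonzero _ _ Hne) as HG.
  remember (dot n (vsub fh f)) as h eqn:Eh. clear Eh.
  assert (h = / (2 * t)) by (field_simplify_eq; lra || (rewrite <- Hh; field; auto)). subst h.
  destruct f as [f1 f2 f3], fh as [a1 a2 a3], n as [n1 n2 n3].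
  unfold dot, vsub, vadd, vscale, zero3 in *; simpl in *.
  unfold im, qadd, qscale, qinv, qsub, qopp, qconj, qnorm2; simpl.
  f_equal; field; auto.
Qed.
Lemma const_1d_le (p : R -> R) a b : a <= b ->
  (forall s, a <= s <= b -> derivable_pt_lim p s 0) -> p a = p b.
Proof.
  intros Hab H.
  assert (pr : forall x, a < x < b -> derivable_pt p x).
  { intros x Hx. exists 0. apply H. lra. }
  assert (Hc : constant_D_eq p (fun x => a <= x <= b) (p a)).
  { apply (null_derivative_loc p a b pr).
    - intros x Hx. apply derivable_continuous_pt. exists 0. apply H. lra.
    - intros x P. unfold derive_pt. destruct (pr x P) as [l Hl]. simpl.
      eapply uniqueness_limite; eauto. apply H. lra. }
  symmetry. apply Hc. lra.
Qed.

Lemma const_1d (p : R -> R) a b :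
  (forall s, Rmin a b <= s <= Rmax a b -> derivable_pt_lim p s 0) -> p a = p b.
Proof.
  intros H. destruct (Rle_dec a b) as [Hab|Hab].
  - apply const_1d_le; auto. intros s Hs; apply H.
    rewrite Rmin_left, Rmax_right; lra.
  - symmetry; apply const_1d_le; [lra|]. intros s Hs; apply H.
    rewrite Rmin_right, Rmax_left; lra.
Qed.

Lemma between_sq s a b : Rmin a b <= s <= Rmax a b -> (s - a)^2 <= (b - a)^2.
Proof.
  intros Hs. destruct (Rle_dec a b) as [h|h].
  - rewrite Rmin_left, Rmax_right in Hs by lra. nra.
  - rewrite Rmin_right, Rmax_left in Hs by lra. nra.
Qed.

Lemma between_sq' s a b : Rmin b a <= s <= Rmax b a -> (s - a)^2 <= (b - a)^2.
Proof. rewrite Rmin_comm, Rmax_comm. apply between_sq. Qed.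

Lemma ball_const U F Fu Fv u v e : 0 < e ->
  (forall u' v', (u' - u) ^ 2 + (v' - v) ^ 2 < e ^ 2 -> U u' v') ->
  is_dpartials U F Fu Fv -> (forall x y, U x y -> Fu x y = 0 /\ Fv x y = 0) ->
  forall u' v', (u' - u) ^ 2 + (v' - v) ^ 2 < e ^ 2 -> F u' v' = F u v.
Proof.
  intros He Hb HP H0 u' v' Hin.
  transitivity (F u' v).
  - apply (const_1d (fun s => F u' s)). intros s Hs.
    assert (HU : U u' s).
    { apply Hb. assert ((s - v)^2 <= (v' - v)^2).
      { apply between_sq'; auto. }
      lra. }
    destruct (HP u' s HU) as [_ Hd]. destruct (H0 u' s HU) as [_ Hz]. rewrite Hz in Hd. auto.
  - symmetry. apply (const_1d (fun s => F s v)). intros s Hs.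
    assert (HU : U s v).
    { apply Hb. assert ((s - u)^2 <= (u' - u)^2).
      { apply between_sq; auto. }
      replace ((v - v)^2) with 0 by ring. pose proof (pow2_ge_0 (v' - v)). lra. }
    destruct (HP s v HU) as [Hd _]. destruct (H0 s v HU) as [Hz _]. rewrite Hz in Hd. auto.
Qed.

Lemma connected_const U F Fu Fv : open_dom U -> connected_dom U ->
  is_dpartials U F Fu Fv -> (forall x y, U x y -> Fu x y = 0 /\ Fv x y = 0) ->
  forall u0 v0 u v, U u0 v0 -> U u v -> F u v = F u0 v0.
Proof.
  intros HO HC HP H0 u0 v0 u v H0U HU.
  destruct (Req_dec (F u v) (F u0 v0)) as [E|NE]; auto. exfalso.
  apply (HC (fun x y => U x y /\ F x y = F u0 v0) (fun x y => U x y /\ F x y <> F u0 v0)).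
  - intros x y [Hxy Ef]. destruct (HO x y Hxy) as [e [He Hb]].
    exists e; split; auto. intros x' y' Hin. split; auto.
    rewrite <- Ef. eapply ball_const; eauto.
  - intros x y [Hxy Ef]. destruct (HO x y Hxy) as [e [He Hb]].
    exists e; split; auto. intros x' y' Hin. split; auto.
    erewrite ball_const; eauto.
  - intros x y Hxy. destruct (Req_dec (F x y) (F u0 v0)); auto.
  - intros x y Hxy [[_ A] [_ B]]. auto.
  - exists u0, v0. auto.
  - exists u, v. auto.
Qed.

Lemma D3_eq A x a b : D3 A x a -> a = b -> D3 A x b.
Proof. intros; subst; auto. Qed.

Lemma LL (N Fl Fhl Nhl : R -> V3) x nd fd fhd e :
  0 < e -> D3 N x nd -> D3 Fl x fd -> D3 Fhl x fhd ->
  (forall s, Rabs (s - x) < e -> dot (N s) (N s) = 1 /\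
     Nhl s = vsub (N s) (vscale (2 * dot (N s) (vsub (Fhl s) (Fl s)) /
                    dot (vsub (Fhl s) (Fl s)) (vsub (Fhl s) (Fl s))) (vsub (Fhl s) (Fl s)))) ->
  Fhl x <> Fl x ->
  dot (N x) nd = 0 /\
  D3 Nhl x (NHD (N x) nd (vsub (Fhl x) (Fl x)) (vsub fhd fd)) /\
  derivable_pt_lim (fun s => dot (N s) (vsub (Fhl s) (Fl s))) x
     (dot nd (vsub (Fhl x) (Fl x)) + dot (N x) (vsub fhd fd)).
Proof.
  intros He HN HF HFh Hloc Hne.
  pose proof (sub_nonzero _ _ Hne) as HG.
  assert (Hg : D3 (fun s => vsub (Fhl s) (Fl s)) x (vsub fhd fd)) by (apply D3_sub; auto).
  split; [|split].
  - pose proof (D3_dot _ _ _ _ _ HN HN) as D1.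
    assert (D2 : derivable_pt_lim (fun s => dot (N s) (N s)) x 0).
    { apply (dlocal (fun _ => 1) _ x 0 e He); [|apply dconst].
      intros y Hy. symmetry. apply (Hloc y Hy). }
    pose proof (uniqueness_limite _ _ _ _ D1 D2) as E.
    rewrite (dot_comm nd) in E. lra.
  - eapply D3_local with (A := fun s => vsub (N s) (vscale (2 * dot (N s) (vsub (Fhl s) (Fl s)) /
                    dot (vsub (Fhl s) (Fl s)) (vsub (Fhl s) (Fl s))) (vsub (Fhl s) (Fl s)))); eauto.
    { intros y Hy. symmetry. apply (Hloc y Hy). }
    eapply D3_eq.
    + apply D3_sub; [exact HN|]. apply D3_scal; [|exact Hg].
      apply ddiv; [| |exact HG].
      * apply dmult. apply dconst. apply D3_dot; [exact HN|exact Hg].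
      * apply D3_dot; exact Hg.
    + unfold NHD. unfold Rsqr. f_equal. f_equal. f_equal. rewrite Rmult_0_l, Rplus_0_l. reflexivity.
  - apply D3_dot; auto.
Qed.

Lemma zero_or c a b g : (dot a a + dot b b) * c = 0 -> dot a g * c = 0 /\ dot b g * c = 0.
Proof.
  intros H. destruct (Req_dec c 0) as [->|Hc]; [split; ring|].
  assert (HS : dot a a + dot b b = 0).
  { apply (Rmult_eq_reg_r c); auto. lra. }
  destruct a as [a1 a2 a3], b as [b1 b2 b3]; unfold dot in *; simpl in *.
  assert (a1 = 0) by nra. assert (a2 = 0) by nra. assert (a3 = 0) by nra.
  assert (b1 = 0) by nra. assert (b2 = 0) by nra. assert (b3 = 0) by nra. subst.
  split; ring.
Qed.

Lemma dot_vadd_scale a b n m F : dot (vadd (vscale a n) (vscale b m)) F = a * dot n F + b * dot m F.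
Proof. unfold dot, vadd, vscale; simpl; ring. Qed.

Lemma dot_zero_l m F : dot m m = 0 -> dot m F = 0.
Proof.
  intros H. destruct m as [a1 a2 a3]; unfold dot in *; simpl in *.
  assert (a1 = 0) by nra. assert (a2 = 0) by nra. assert (a3 = 0) by nra. subst. ring.
Qed.

Lemma comb (t G Su Sv c h mu mv : R) :
  t*G*Su*c + 2*t*h*mu + (t*G*Sv*c + 2*t*h*mv) = 0 -> mu + mv = 0 -> t <> 0 -> G <> 0 ->
  (Su+Sv)*c = 0.
Proof.
  intros H1 H2 Ht HG.
  assert (E : t*G*((Su+Sv)*c) = 0).
  { replace (t*G*((Su+Sv)*c)) with (t*G*Su*c + 2*t*h*mu + (t*G*Sv*c + 2*t*h*mv) - 2*t*h*(mu+mv)) by ring.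
    rewrite H1, H2. ring. }
  destruct (Rmult_integral _ _ E) as [E1|E1]; auto.
  destruct (Rmult_integral _ _ E1); contradiction.
Qed.

Lemma dot_self_ge0 a : 0 <= dot a a.
Proof. destruct a; unfold dot; simpl; nra. Qed.

Theorem corollary3p3 (U : dom) (f fh n nh : R -> R -> V3) (t : R) :
  open_dom U -> connected_dom U ->
  t <> 0 ->
  immersion U f -> immersion U fh ->
  conformal U f -> conformal U fh ->
  minimal U f -> minimal U fh ->
  non_flat U f -> non_flat U fh ->
  darboux_pair U f fh ->
  gauss_map U f n ->
  (forall u v, U u v -> fh u v <> f u v) ->
  darboux_transform U f fh n t ->
  (forall u v, U u v ->
     im (nh u v) = qopp (qmul (qmul (qinv (im (vsub (fh u v) (f u v)))) (im (n u v)))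
                              (im (vsub (fh u v) (f u v))))) ->
  gauss_map U fh nh ->
  exists c : V3, forall u v, U u v ->
    im (fh u v) = qadd (im (vadd (f u v) c))
                       (qscale (/ t) (qinv (qsub (im (nh u v)) (im (n u v))))).
Proof.
  intros HO HC Ht Hif Hifh Hcf Hcfh Hmf Hmfh Hnf _ _ Hgn Hne Hdt Hnh Hgnh.
  destruct Hif as [_ [fu [fv [Pf Hcr]]]].
  destruct Hifh as [_ [fhu [fhv [Pfh Hcrh]]]].
  pose proof Hgn as Hgn0. destruct Hgn as [Hsn Hgn].
  destruct (smooth3_partials _ _ Hsn) as [nu [nv Pn]].
  set (g := fun u v => vsub (fh u v) (f u v)).
  set (hf := fun u v => dot (n u v) (g u v)).
  set (NHU := fun u v => NHD (n u v) (nu u v) (g u v) (vsub (fhu u v) (fu u v))).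
  set (NHV := fun u v => NHD (n u v) (nv u v) (g u v) (vsub (fhv u v) (fv u v))).
  set (HU := fun u v => dot (nu u v) (g u v) + dot (n u v) (vsub (fhu u v) (fu u v))).
  set (HV := fun u v => dot (nv u v) (g u v) + dot (n u v) (vsub (fhv u v) (fv u v))).
  assert (HGn : forall u v, U u v -> dot (g u v) (g u v) <> 0).
  { intros u v Huv. apply sub_nonzero. auto. }
  assert (HQN : forall u v, U u v -> nh u v = vsub (n u v)
            (vscale (2 * dot (n u v) (g u v) / dot (g u v) (g u v)) (g u v))).
  { intros u v Huv. apply QN; auto. }
  assert (Hpt : forall u v, U u v ->
    fhu u v = FHD t (g u v) (nu u v) /\ fhv u v = FHD t (g u v) (nv u v) /\
    dot (n u v) (fu u v) = 0 /\ dot (n u v) (fv u v) = 0 /\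
    dot (n u v) (nu u v) = 0 /\ dot (n u v) (nv u v) = 0 /\
    D3 (fun s => nh s v) u (NHU u v) /\ D3 (fun s => nh u s) v (NHV u v) /\
    derivable_pt_lim (fun s => hf s v) u (HU u v) /\
    derivable_pt_lim (fun s => hf u s) v (HV u v)).
  { intros u v Huv.
    destruct (Hdt fhu fhv nu nv Pfh Pn u v Huv) as [D1 D2].
    destruct (Hgn u v Huv) as [_ Hperp]. destruct (Hperp fu fv Pf) as [P1 P2].
    destruct (open_lines U u v HO Huv) as [e [He [Lu Lv]]].
    destruct (partials_D3 _ _ _ _ u v Pf Huv) as [Fu1 Fv1].
    destruct (partials_D3 _ _ _ _ u v Pfh Huv) as [Fhu1 Fhv1].
    destruct (partials_D3 _ _ _ _ u v Pn Huv) as [Nu1 Nv1].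
    destruct (LL (fun s => n s v) (fun s => f s v) (fun s => fh s v) (fun s => nh s v) u
                 (nu u v) (fu u v) (fhu u v) e He Nu1 Fu1 Fhu1) as [A1 [A2 A3]].
    { intros s Hs. pose proof (Lu s Hs) as HsU. split; [apply (Hgn s v HsU)|].
      apply (HQN s v HsU). }
    { apply Hne; auto. }
    destruct (LL (fun s => n u s) (fun s => f u s) (fun s => fh u s) (fun s => nh u s) v
                 (nv u v) (fv u v) (fhv u v) e He Nv1 Fv1 Fhv1) as [B1 [B2 B3]].
    { intros s Hs. pose proof (Lv s Hs) as HsU. split; [apply (Hgn u s HsU)|].
      apply (HQN u s HsU). }
    { apply Hne; auto. }
    split; [apply QD; exact D1|]. split; [apply QD; exact D2|].
    split; [exact P1|]. split; [exact P2|]. split; [exact A1|]. split; [exact B1|].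
    split; [exact A2|]. split; [exact B2|]. split; [exact A3|exact B3]. }
  assert (Pnh : is_partials3 U nh NHU NHV).
  { apply D3_partials. intros u v Huv.
    destruct (Hpt u v Huv) as [_ [_ [_ [_ [_ [_ [X [Y _]]]]]]]]. exact (conj X Y). }
  assert (Hkey : forall u v, U u v ->
     (dot (nu u v) (nu u v) + dot (nv u v) (nv u v)) * (1 - 2 * t * hf u v) = 0).
  { intros u v Huv.
    destruct (Hpt u v Huv) as [E1 [E2 [P1 [P2 [N1 [N2 _]]]]]].
    pose proof (Hmfh fhu fhv nh NHU NHV Pfh Hgnh Pnh u v Huv) as T1.
    destruct (Hcfh fhu fhv Pfh u v Huv) as [C1 C2].
    apply (trace_lem _ _ _ _ C1 C2 (cross_nonzero _ _ (Hcrh u v Huv))) in T1.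
    pose proof (Hmf fu fv n nu nv Pf Hgn0 Pn u v Huv) as T2.
    destruct (Hcf fu fv Pf u v Huv) as [C3 C4].
    apply (trace_lem _ _ _ _ C3 C4 (cross_nonzero _ _ (Hcr u v Huv))) in T2.
    unfold NHU, NHV in T1. rewrite E1, E2 in T1.
    rewrite (KA _ _ _ _ _ (HGn u v Huv) N1 P1), (KA _ _ _ _ _ (HGn u v Huv) N2 P2) in T1.
    rewrite (dot_comm (nu u v)), (dot_comm (nv u v)) in T2.
    exact (comb _ _ _ _ _ _ _ _ T1 T2 Ht (HGn u v Huv)). }
  assert (Hdz : forall u v, U u v -> HU u v = 0 /\ HV u v = 0).
  { intros u v Huv.
    destruct (Hpt u v Huv) as [E1 [E2 [P1 [P2 [N1 [N2 _]]]]]].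
    destruct (zero_or _ _ _ (g u v) (Hkey u v Huv)) as [Z1 Z2].
    unfold HU, HV. rewrite E1, E2, (HD_lem _ _ _ _ _ N1 P1), (HD_lem _ _ _ _ _ N2 P2).
    rewrite (dot_comm (g u v) (nu u v)), (dot_comm (g u v) (nv u v)). auto. }
  assert (Php : is_dpartials U hf HU HV).
  { intros u v Huv. destruct (Hpt u v Huv) as [_ [_ [_ [_ [_ [_ [_ [_ [X Y]]]]]]]]]. exact (conj X Y). }
  destruct Hnf as [Fu' [Fv' [N' [Nu' [Nv' [PF' [HgN' [PN' [u0 [v0 [HU0 Hdet]]]]]]]]]]].
  assert (Hc0 : 1 - 2 * t * hf u0 v0 = 0).
  { destruct (Req_dec (1 - 2 * t * hf u0 v0) 0) as [|Hc]; [assumption|]. exfalso.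
    pose proof (Hkey u0 v0 HU0) as K.
    destruct (Rmult_integral _ _ K) as [S0|]; [|contradiction].
    pose proof (dot_self_ge0 (nu u0 v0)). pose proof (dot_self_ge0 (nv u0 v0)).
    assert (Su : dot (nu u0 v0) (nu u0 v0) = 0) by lra.
    assert (Sv : dot (nv u0 v0) (nv u0 v0) = 0) by lra.
    destruct (open_lines U u0 v0 HO HU0) as [e [He [Lu Lv]]].
    destruct (partials_D3 _ _ _ _ u0 v0 Pn HU0) as [Nu1 Nv1].
    destruct (partials_D3 _ _ _ _ u0 v0 PN' HU0) as [Mu1 Mv1].
    assert (Hpar : forall x y, U x y -> N' x y = vscale (dot (N' x y) (n x y)) (n x y)).
    { intros x y Hxy. destruct (proj2 HgN' x y Hxy) as [_ Hp1]. destruct (Hp1 fu fv Pf) as [Q1 Q2].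
      destruct (Hgn x y Hxy) as [Hn1 Hp2]. destruct (Hp2 fu fv Pf) as [Q3 Q4].
      exact (parallel _ _ (fu x y) (fv x y) Q1 Q2 Q3 Q4 Hn1 (Hcr x y Hxy)). }
    pose proof (D3_scal _ _ _ _ _ (D3_dot _ _ _ _ _ Mu1 Nu1) Nu1) as Su1.
    pose proof (D3_scal _ _ _ _ _ (D3_dot _ _ _ _ _ Mv1 Nv1) Nv1) as Sv1.
    assert (EU : Nu' u0 v0 = vadd (vscale (dot (Nu' u0 v0) (n u0 v0) + dot (N' u0 v0) (nu u0 v0)) (n u0 v0))
                                  (vscale (dot (N' u0 v0) (n u0 v0)) (nu u0 v0))).
    { eapply D3_unique; [exact Mu1|]. eapply D3_local; [exact He| |exact Su1].
      intros s Hs. simpl. symmetry. apply Hpar. apply Lu; auto. }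
    assert (EV : Nv' u0 v0 = vadd (vscale (dot (Nv' u0 v0) (n u0 v0) + dot (N' u0 v0) (nv u0 v0)) (n u0 v0))
                                  (vscale (dot (N' u0 v0) (n u0 v0)) (nv u0 v0))).
    { eapply D3_unique; [exact Mv1|]. eapply D3_local; [exact He| |exact Sv1].
      intros s Hs. simpl. symmetry. apply Hpar. apply Lv; auto. }
    destruct (Hgn u0 v0 HU0) as [_ Hp2]. destruct (Hp2 Fu' Fv' PF') as [Q3 Q4].
    apply Hdet. apply det_zero; [rewrite EU | rewrite EU | rewrite EV | rewrite EV];
      rewrite dot_vadd_scale, ?Q3, ?Q4, ?(dot_zero_l _ _ Su), ?(dot_zero_l _ _ Sv); ring. }
  exists zero3. intros u v Huv.
  rewrite (HQN u v Huv). apply final_alg; [exact Ht | apply Hne; exact Huv |].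
  pose proof (connected_const U hf HU HV HO HC Php Hdz u0 v0 u v HU0 Huv) as Eh.
  change (2 * t * hf u v = 1). rewrite Eh. lra.
Qed.
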